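(* For every $n\ge3$ and every $\varepsilon>0$ there is a single-parameter setting with $n$ agents, a downward-closed feasibility family $\mathcal{I}$, and valuations that are single-crossing and SOS, such that every deterministic ex-post IC mechanism has, at some signal profile, welfare at most $\frac{1}{n-1-\varepsilon}$ times the optimal welfare $\max_{S\in\mathcal{I}}\sum_{i\in S}v_i(\mathbf{s})$.
   Context: Single-parameter model: agent $j$ has a scalar signal $s_j$ (possibly from a one-point set), the value $v_j(\mathbf{s})\ge0$ for being served is a public weakly increasing function of the profile; a deterministic mechanism chooses a served set in $\mathcal{I}$ (downward closed) and payments; ex-post IC as usual, which for deterministic mechanisms requires that each agent's service indicator be weakly increasing in her own reported signal. Single-crossing: for all agents $i,\ell$, all $\mathbf{s}_{-i}$ and $s_i<s_i'$, $v_i(s_i',\mathbf{s}_{-i})-v_i(s_i,\mathbf{s}_{-i})\ge v_\ell(s_i',\mathbf{s}_{-i})-v_\ell(s_i,\mathbf{s}_{-i})$. SOS: for every coordinate $j$, $s_j$, $\delta\ge0$, $\mathbf{s}'_{-j}\le\mathbf{s}_{-j}$ coordinate-wise, $v(\mathbf{s}'_{-j},s_j+\delta)-v(\mathbf{s}'_{-j},s_j)\ge v(\mathbf{s}_{-j},s_j+\delta)-v(\mathbf{s}_{-j},s_j)$. *)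

(* Defs.v *)
From mathcomp Require Import all_boot.
From Stdlib Require Import Reals.
Set Implicit Arguments. Unset Strict Implicit. Unset Printing Implicit Defensive.

Local Open Scope R_scope.

Section Setting.
Variable n : nat.

Definition profile := 'I_n -> R.
Definition sigspace := 'I_n -> R -> Prop.
Definition valuations := 'I_n -> profile -> R.

Definition valid (Sig : sigspace) (s : profile) : Prop := forall j, Sig j (s j).

Definition upd (s : profile) (i : 'I_n) (t : R) : profile :=
  fun j => if j == i then t else s j.

Definition nonneg_vals (Sig : sigspace) (v : valuations) : Prop :=
  forall i s, valid Sig s -> 0 <= v i s.

Definition monotone_vals (Sig : sigspace) (v : valuations) : Prop :=
  forall i s s', valid Sig s -> valid Sig s' ->
    (forall j, s j <= s' j) -> v i s <= v i s'.

Definition single_crossing (Sig : sigspace) (v : valuations) : Prop :=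
  forall (i l : 'I_n) (s : profile) (t t' : R),
    valid Sig s -> Sig i t -> Sig i t' -> t < t' ->
    v i (upd s i t') - v i (upd s i t) >= v l (upd s i t') - v l (upd s i t).

Definition SOS (Sig : sigspace) (v : valuations) : Prop :=
  forall (k j : 'I_n) (s s' : profile) (t t' : R),
    valid Sig s -> valid Sig s' ->
    (forall m, m != j -> s' m <= s m) ->
    Sig j t -> Sig j t' -> t <= t' ->
    v k (upd s' j t') - v k (upd s' j t) >= v k (upd s j t') - v k (upd s j t).

Definition downward_closed (I : {set {set 'I_n}}) : Prop :=
  forall A B : {set 'I_n}, A \in I -> B \subset A -> B \in I.

Definition welfare (v : valuations) (s : profile) (A : {set 'I_n}) : R :=
  \big[Rplus/0]_(i in A) v i s.

(* max_{A in I} sum_{i in A} v_i(s); the 0 default is harmless since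
   values are nonnegative and set0 \in I *)
Definition opt_welfare (v : valuations) (I : {set {set 'I_n}}) (s : profile) : R :=
  \big[Rmax/0]_(A in I) welfare v s A.

Definition ind (b : bool) : R := if b then 1 else 0.

Definition feasible_alloc (Sig : sigspace) (I : {set {set 'I_n}})
  (x : profile -> {set 'I_n}) : Prop :=
  forall s, valid Sig s -> x s \in I.

Definition expost_IC (Sig : sigspace) (v : valuations)
  (x : profile -> {set 'I_n}) (p : profile -> 'I_n -> R) : Prop :=
  forall (i : 'I_n) (s : profile) (t : R), valid Sig s -> Sig i t ->
    v i s * ind (i \in x s) - p s i >=
    v i s * ind (i \in x (upd s i t)) - p (upd s i t) i.

End Setting.

(* Main.v *)
Require Import Defs.
From mathcomp Require Import all_boot.
From Stdlib Require Import Reals.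
From HB Require Import structures.
From Stdlib Require Import Lra Psatz FunctionalExtensionality.

Local Open Scope R_scope.

HB.instance Definition _ := Monoid.isComLaw.Build R 0 Rplus (fun a b c => esym (Rplus_assoc a b c)) Rplus_comm Rplus_0_l.

Lemma le_bigmax_seq (I : eqType) (r : seq I) (P : pred I) (F : I -> R) (x : I) :
  x \in r -> P x -> F x <= \big[Rmax/0]_(i <- r | P i) F i.
Proof.
elim: r => [//|y r IH]; rewrite in_cons big_cons => /orP [/eqP -> Px | xr Px].
  by rewrite Px; apply Rmax_l.
case: (P y); last by apply IH.
apply: Rle_trans (IH xr Px) _; apply Rmax_r.
Qed.

Lemma le_opt n (v : valuations n) (I : {set {set 'I_n}}) s A :
  A \in I -> welfare v s A <= opt_welfare v I s.
Proof.
move=> HA; rewrite /opt_welfare; apply: le_bigmax_seq => //; exact: mem_index_enum.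
Qed.

Lemma iter_Rplus k c : iter k (Rplus c) 0 = INR k * c.
Proof. elim: k => [/=|k IH]; first lra. rewrite iterS IH S_INR; lra. Qed.

Lemma INR_pred m : (1 <= m)%nat -> INR m.-1 = INR m - 1.
Proof. case: m => [//|m] _; rewrite S_INR /=; lra. Qed.

Local Close Scope R_scope.

Theorem mainTheorem14 :
  forall (n : nat), (3 <= n)%N ->
  forall eps : R, (0 < eps)%R ->
  exists (Sig : sigspace n) (I : {set {set 'I_n}}) (v : valuations n),
    set0 \in I /\ downward_closed I /\
    nonneg_vals Sig v /\ monotone_vals Sig v /\
    single_crossing Sig v /\ SOS Sig v /\
    forall (x : profile n -> {set 'I_n}) (p : profile n -> 'I_n -> R),
      feasible_alloc Sig I x -> expost_IC Sig v x p ->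
      exists s : profile n, valid Sig s /\
        (0 < opt_welfare v I s)%R /\
        ((INR n - 1 - eps) * welfare v s (x s) <= opt_welfare v I s)%R.
Proof.
Local Open Scope R_scope.
move=> n Hn eps Heps.
have n0 : leq 1 n by apply: (@leq_trans 3%nat).
pose a0 : 'I_n := Ordinal n0.
pose d := INR n / eps.
have nR : 3 <= INR n by have := le_INR 3 n (ssrnat.leP Hn); rewrite /= ; lra.
have dpos : 0 < d by rewrite /d; apply Rdiv_lt_0_compat; lra.
have ed : eps * d = INR n by rewrite /d; field; lra.
pose Sig : sigspace n := fun _ t => 0 <= t <= 1.
pose I := [set A : {set 'I_n} | (A \subset [set a0]) || (a0 \notin A)].
pose v : valuations n := fun k s => if k == a0 then 1 + d * s a0 else d * s a0.
exists Sig, I, v.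
have inI A : (A \in I) = (A \subset [set a0]) || (a0 \notin A) by rewrite inE.
split; first by rewrite inI sub0set.
split.
  move=> A B; rewrite !inI => /orP [HA|HA] HB; apply/orP.
    by left; apply: subset_trans HB HA.
  by right; apply: contra HA; apply: (subsetP HB).
split.
  move=> i s Hs; have := Hs a0; rewrite /v /Sig; case: (i == a0) => H; nra.
split.
  move=> i s s' Hs Hs' Hss; have := Hss a0; rewrite /v; case: (i == a0) => H; nra.
split.
  move=> i l s t t' Hs Ht Ht' Htt; rewrite /v /upd (eq_sym a0 i).
  case: (i == a0); case: (l == a0); nra.
split.
  move=> k j s s' t t' Hs Hs' Hss Ht Ht' Htt; rewrite /v /upd (eq_sym a0 j).
  case: (j == a0); case: (k == a0); nra.
move=> x p Hf Hic.
pose s0 : profile n := fun _ => 0.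
pose s1 := upd s0 a0 1.
have vs0 : valid Sig s0 by move=> j; rewrite /Sig /s0; lra.
have vs1 : valid Sig s1 by move=> j; rewrite /Sig /s1 /upd /s0; case: (j == a0); lra.
have s1a : s1 a0 = 1 by rewrite /s1 /upd eqxx.
have s10 : upd s1 a0 0 = s0.
  by apply: functional_extensionality => j; rewrite /upd /s1 /upd; case: (j == a0).
have a0I : [set a0] \in I by rewrite inI subxx.
have wa0 s : welfare v s [set a0] = 1 + d * s a0 by rewrite /welfare big_set1 /v eqxx.
case H1: (a0 \in x s1).
  exists s1; split => //.
  have Hopt1 := @le_opt n v I s1 _ a0I; rewrite wa0 s1a in Hopt1.
  split; first lra.
  have xs1 : x s1 = [set a0].
    have := Hf s1 vs1; rewrite inI H1 orbF => Hsub.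
    by apply/eqP; rewrite eqEsubset Hsub sub1set H1.
  rewrite xs1 wa0 s1a.
  have cI : [set~ a0] \in I by rewrite inI !inE eqxx orbT.
  have Hc := @le_opt n v I s1 _ cI.
  have wc : welfare v s1 [set~ a0] = INR (n.-1) * d.
    rewrite /welfare (eq_bigr (fun _ => d)); last first.
      by move=> i; rewrite !inE /v => /negbTE ->; rewrite s1a; lra.
    by rewrite big_const cardsC1 card_ord iter_Rplus.
  rewrite wc in Hc.
  have : INR n.-1 = INR n - 1 by apply: INR_pred.
  move=> E; rewrite E in Hc; nra.
have H0 : a0 \in x s0 = false.
  apply/negbTE/negP => H0.
  have ic1 := Hic a0 s0 1 vs0 (ltac:(rewrite /Sig; lra)).
  have ic2 := Hic a0 s1 0 vs1 (ltac:(rewrite /Sig; lra)).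
  rewrite s10 -/s1 H1 H0 /v eqxx s1a /s0 in ic1 ic2; unfold Defs.ind in ic1, ic2; lra.
exists s0; split => //.
have Hopt0 := @le_opt n v I s0 _ a0I; rewrite wa0 (_ : s0 a0 = 0) // Rmult_0_r in Hopt0.
split; first lra.
have -> : welfare v s0 (x s0) = 0.
  rewrite /welfare; apply: (big_ind (fun y => y = 0)) => //.
    by move=> ? ? -> ->; lra.
  move=> i Hi; rewrite /v; case: eqP => [E|_]; first by rewrite E H0 in Hi.
  rewrite /s0; lra.
rewrite Rmult_0_r; lra.
Qed.
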